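(* Every transitive compact dynamical system $(X,T)$ is Li-Yorke chaotic.
   Context: A dynamical system $(X,T)$: $X$ is a compact metric space (metric $d$) with more than one point and without isolated points, $T:X\to X$ a continuous surjection. ''Opene'' means open and nonempty. $N_T(U,V)=\{n\in\mathbb{Z}_+:U\cap T^{-n}V\neq\varnothing\}$; $\mathcal{N}_T$ is the family of all subsets of $\mathbb{Z}_+$ containing some $N_T(U,V)$ with $U,V$ opene; $\omega_{\mathcal{N}_T}(x)=\bigcap_{F\in\mathcal{N}_T}\overline{\{T^ix:i\in F\}}$; $(X,T)$ is transitive compact if $\omega_{\mathcal{N}_T}(x)\neq\varnothing$ for all $x\in X$. A pair $(x,y)$ is proximal if $\liminf_{n\to\infty}d(T^nx,T^ny)=0$ and asymptotic if $\lim_{n\to\infty}d(T^nx,T^ny)=0$. $(X,T)$ is Li-Yorke chaotic if there exists an uncountable set $S\subset X$ such that every pair $(x,y)\in S\times S$ with $x\neq y$ is proximal but not asymptotic. *)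

(* Defs.v *)
From HB Require Import structures.
From mathcomp Require Import all_boot all_order all_algebra.
From mathcomp Require Import all_classical all_reals all_analysis.
Set Implicit Arguments. Unset Strict Implicit. Unset Printing Implicit Defensive.
Import Order.TTheory GRing.Theory Num.Theory numFieldTopology.Exports.
Local Open Scope classical_set_scope.
Local Open Scope ring_scope.

Definition opene {Y : topologicalType} (U : set Y) := open U /\ U !=set0.

Definition hitting_times {Y : Type} (T : Y -> Y) (U V : set Y) : set nat :=
  [set n | U `&` (iter n T @^-1` V) !=set0].

Definition hitting_family {Y : topologicalType} (T : Y -> Y) : set (set nat) :=
  [set F | exists U V, [/\ opene U, opene V & hitting_times T U V `<=` F]].

Definition omega_NT {Y : topologicalType} (T : Y -> Y) (x : Y) : set Y :=
  \bigcap_(F in hitting_family T) closure [set iter i T x | i in F].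

Definition transitive_compact {Y : topologicalType} (T : Y -> Y) :=
  forall x, omega_NT T x !=set0.

Definition proximal {R : realType} {X : metricType R} (T : X -> X) (x y : X) :=
  limn_einf (fun n => (mdist (iter n T x) (iter n T y))%:E) = 0%E.

Definition asymptotic {R : realType} {X : metricType R} (T : X -> X) (x y : X) :=
  (fun n => mdist (iter n T x) (iter n T y)) @ \oo --> (0 : R).

Definition LiYorke_chaotic {R : realType} {X : metricType R} (T : X -> X) :=
  exists S : set X, ~ countable S /\
    forall x y, S x -> S y -> x <> y -> proximal T x y /\ ~ asymptotic T x y.

(* Main.v *)
Require Import Defs.
From HB Require Import structures.
From mathcomp Require Import all_boot all_order all_algebra.
From mathcomp Require Import all_classical all_reals all_analysis.
From mathcomp Require Import lra.
Local Open Scope classical_set_scope.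

Module LYaux.
Set Implicit Arguments. Unset Strict Implicit. Unset Printing Implicit Defensive.
Import Order.TTheory GRing.Theory Num.Theory numFieldTopology.Exports.
Local Open Scope classical_set_scope.
Local Open Scope ring_scope.

Section S.
Context {R : realType} {X : metricType R}.

Lemma mball_open (x : X) (e : R) : open (ball x e).
Proof.
rewrite openE => y; rewrite /interior ballEmdist /= => dxy.
apply/nbhs_ballP; exists (e - mdist x y); first by rewrite /=; lra.
move=> w; rewrite ballEmdist /= => dyw.
have := metric_triangle x y w; lra.
Qed.

Lemma mfar_open (x : X) (e : R) : open [set y | e < mdist x y].
Proof.
rewrite openE => y; rewrite /interior /= => dxy.
apply/nbhs_ballP; exists (mdist x y - e); first by rewrite /=; lra.
move=> w; rewrite ballEmdist /= => dyw.
have := metric_triangle x w y; rewrite (metric_sym w y); lra.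
Qed.

Lemma iter_cont (T : X -> X) n : continuous T -> continuous (iter n T).
Proof.
move=> cT; elim: n => [|n IH] x /=; first exact: cvg_id.
exact: (continuous_comp (IH x) (cT _)).
Qed.

Lemma iter_surj (T : X -> X) n : (forall y, exists x, T x = y) ->
  forall y, exists x, iter n T x = y.
Proof.
move=> sT; elim: n => [|n IH] y; first by exists y.
have [w <-] := sT y; have [x <-] := IH w; exists x; by [].
Qed.

Definition dn (U : set X) := forall B, open B -> B !=set0 -> B `&` U !=set0.

Lemma key (T : X -> X) : transitive_compact T -> forall s, exists z : X, forall B V W,
  opene B -> opene V -> nbhs z W ->
  exists i, W (iter i T s) /\ B `&` (iter i T @^-1` V) !=set0.
Proof.
move=> tc s; have [z Hz] := tc s; exists z => B V W oB oV nW.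
have hf : hitting_family T (hitting_times T B V) by exists B, V; split.
have [y [[i Fi <-] Wi]] := Hz _ hf W nW.
by exists i.
Qed.

Lemma dist_lt2 (c a b : X) e : ball c (e/2) a -> ball c (e/2) b -> mdist a b < e.
Proof.
rewrite !ballEmdist /= => ha hb.
have := metric_triangle a c b; rewrite (metric_sym a c); lra.
Qed.

Lemma pre_open (T : X -> X) n (A : set X) : continuous T -> open A ->
  open (iter n T @^-1` A).
Proof. by move=> cT; apply: (continuousP _).1; apply: iter_cont. Qed.

Lemma open_nbhs_in (A : set X) x : open A -> A x -> nbhs x A.
Proof. by rewrite openE => oA /oA. Qed.

Definition O1 (T : X -> X) s k := [set y | exists2 n, (k <= n)%N &
  mdist (iter n T s) (iter n T y) < k.+1%:R^-1].

Definition O2 (T : X -> X) (d : R) s k := [set y | exists2 n, (k <= n)%N &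
  d < mdist (iter n T s) (iter n T y)].

Lemma O1_open T s k : continuous T -> open (O1 T s k).
Proof.
move=> cT; rewrite openE => y [n kn dn].
have op := pre_open n cT (mball_open (iter n T s) k.+1%:R^-1).
have ny : nbhs y (iter n T @^-1` ball (iter n T s) k.+1%:R^-1).
  by apply: open_nbhs_in op _; rewrite /= ballEmdist.
by move: ny; apply: filterS => w /=; rewrite ballEmdist => h; exists n.
Qed.

Lemma O2_open T d s k : continuous T -> open (O2 T d s k).
Proof.
move=> cT; rewrite openE => y [n kn dn].
have op := pre_open n cT (mfar_open (iter n T s) d).
have ny : nbhs y (iter n T @^-1` [set w | d < mdist (iter n T s) w]).
  exact: open_nbhs_in op _.
by move: ny; apply: filterS => w /= h; exists n.
Qed.

Lemma opene_pre (T : X -> X) k c e : continuous T -> (forall y, exists x, T x = y) ->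
  0 < e -> opene (iter k T @^-1` ball c e).
Proof.
move=> cT sT e0; split; first exact: pre_open (mball_open _ _).
have [w wc] := iter_surj k sT c; exists w; rewrite /= wc; exact: ballxx.
Qed.

Lemma O1_dense T s k : continuous T -> (forall y, exists x, T x = y) ->
  transitive_compact T -> dn (O1 T s k).
Proof.
move=> cT sT tc B oB B0.
have [z Hz] := key tc s.
pose e : R := k.+1%:R^-1.
have e0 : 0 < e / 2 by rewrite divr_gt0 // invr_gt0 ltr0n.
pose V := iter k T @^-1` ball (iter k T z) (e / 2).
have oV : opene V by exact: opene_pre.
have nV : nbhs z V by apply: open_nbhs_in oV.1 _; exact: ballxx.
have [i [Vi [y [By Vy]]]] := Hz B V V (conj oB B0) oV nV.
exists y; split => //; exists (k + i)%N; first exact: leq_addr.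
by rewrite !iterD; apply: dist_lt2 Vi Vy.
Qed.

Lemma O2_dense T s k (a b : X) : continuous T -> (forall y, exists x, T x = y) ->
  transitive_compact T -> a <> b -> dn (O2 T (mdist a b / 4) s k).
Proof.
move=> cT sT tc ab B oB B0.
have [z Hz] := key tc s.
pose c := iter k T z; pose D := mdist a b.
have D0 : 0 < D by rewrite /D mdist_gt0; apply/eqP.
have [y0 Hy0] : exists y0, D / 2 <= mdist c y0.
  case: (lerP (D / 2) (mdist c a)) => h; first by exists a.
  exists b; have := metric_triangle a c b; rewrite (metric_sym a c) -/D.
  lra.
have e0 : 0 < D / 8 by lra.
pose V := iter k T @^-1` ball y0 (D / 8).
pose W := iter k T @^-1` ball c (D / 8).
have oV : opene V by exact: opene_pre.
have nW : nbhs z W by apply: open_nbhs_in (opene_pre k c cT sT e0).1 _; exact: ballxx.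
have [i [Wi [y [By Vy]]]] := Hz B V W (conj oB B0) oV nW.
exists y; split => //; exists (k + i)%N; first exact: leq_addr.
rewrite !iterD; move: Wi Vy; rewrite /W /V /= !ballEmdist /= -/D.
set p := iter k T (iter i T s); set q := iter k T (iter i T y) => hp hq.
have := metric_triangle c p y0; have := metric_triangle p q y0; rewrite (metric_sym q y0).
lra.
Qed.

Lemma neq_dense (x : X) : (forall x : X, ~ isolated [set: X] x) -> open (~` [set x]) /\ dn (~` [set x]).
Proof.
move=> niso; split.
  rewrite openE => y /= yx; apply/nbhs_ballP; exists (mdist x y).
    by rewrite /= mdist_gt0; apply/eqP => h; apply: yx; rewrite h.
  by move=> w; rewrite ballEmdist /= => h wx; move: h; rewrite wx metric_sym ltxx.
move=> B oB [b Bb].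
apply: contrapT => hB.
have Bx : forall w, B w -> w = x.
  by move=> w Bw; apply: contrapT => wx; apply: hB; exists w.
apply: (niso b); split; first by rewrite in_setT.
exists B; first exact: open_nbhs_in oB Bb.
apply/seteqP; split => w /=; first by case=> /Bx -> _; rewrite (Bx _ Bb).
by move=> ->; split.
Qed.
Lemma baire_c (x0 : X) : compact [set: X] -> forall U : nat -> set X,
  (forall n, open (U n)) -> (forall n, dn (U n)) -> exists y, forall n, U n y.
Proof.
move=> cX U oU dU.
have step : forall (nq : nat * (X * R)), exists q' : X * R, 0 < nq.2.2 ->
    0 < q'.2 /\ ball q'.1 (q'.2 + q'.2) `<=` ball nq.2.1 nq.2.2 `&` U nq.1.
  move=> [n [p r]] /=; case: (ltrP 0 r) => r0; last by exists (p, r) => /=; rewrite ltNge r0.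
  have [w [bw Uw]] := dU n _ (mball_open p r) (ex_intro _ p (ballxx p r0)).
  have oI : open (ball p r `&` U n) by apply: openI; [exact: mball_open | exact: oU].
  have /nbhs_ballP [e /= e0 he] := open_nbhs_in oI (conj bw Uw).
  exists (w, e / 2) => _ /=; split; first by rewrite divr_gt0.
  by rewrite -splitr.
have [g hg] := choice step.
pose q := fix f (n : nat) : X * R := if n is m.+1 then g (m, f m) else (x0, 1).
have rpos : forall n, 0 < (q n).2.
  by elim=> [|n IH] //=; have [] := hg (n, q n) IH.
have nest : forall n, ball (q n.+1).1 ((q n.+1).2 + (q n.+1).2) `<=` ball (q n).1 (q n).2 `&` U n.
  by move=> n; have [] := hg (n, q n) (rpos n).
have sub1 : forall n, ball (q n.+1).1 (q n.+1).2 `<=` ball (q n).1 (q n).2.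
  move=> n w bw; have := nest n w; case => //.
  by apply: le_ball _ bw; have := rpos n.+1; lra.
have subd : forall d n, ball (q (d + n)%N).1 (q (d + n)%N).2 `<=` ball (q n).1 (q n).2.
  elim=> [|d IH] n //= w bw; apply: IH; exact: sub1.
pose F := (fun m => (q m).1) @ \oo.
have [y [_ cy]] := cX F _ (filterT).
exists y => n.
have FA : F (ball (q n.+1).1 (q n.+1).2).
  exists n.+1 => // m /= hm; rewrite -(subnK hm); apply: (subd (m - n.+1)%N n.+1); exact: ballxx.
have nb : nbhs y (ball y (q n.+1).2) by apply: nbhsx_ballx; exact: rpos.
have [w [bw1 bw2]] := cy _ _ FA nb.
have := nest n y; case => //.
exact: ball_triangle bw1 (ball_sym bw2).
Qed.
Lemma prox_of (T : X -> X) s y : (forall k, O1 T s k y) -> proximal T s y.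
Proof.
move=> h; rewrite /proximal limn_einf_lim.
set u := fun n => _.
have -> : einfs u = fun _ => 0%E.
  apply/funext => n; apply/eqP; rewrite eq_le; apply/andP; split.
  - apply/lee_addgt0Pr => e e0; rewrite add0e.
    have [k0 _ hk0] := near_infty_natSinv_lt (PosNum e0).
    have [m km dm] := h (maxn n k0).
    apply: ge_ereal_inf; exists (u m).
      by exists m => //=; exact: leq_trans (leq_maxl _ _) km.
    rewrite lee_fin; apply: ltW; apply: lt_trans dm _; apply: hk0.
    by rewrite /= leq_maxr.
  - by apply: le_ereal_inf_tmp => _ [m _ <-]; rewrite lee_fin; exact: mdist_ge0.
exact: lim_cst.
Qed.

Lemma nasym_of (T : X -> X) d s y : 0 < d -> (forall k, O2 T d s k y) -> ~ asymptotic T s y.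
Proof.
move=> d0 h /cvgrPdist_lt /(_ d d0) [N _ hN].
have [m km dm] := h N.
have := hN m km; rewrite /= sub0r normrN ger0_norm ?mdist_ge0 //.
lra.
Qed.

Lemma prox_sym (T : X -> X) x y : proximal T x y -> proximal T y x.
Proof.
by rewrite /proximal; under eq_fun do rewrite metric_sym.
Qed.

Lemma asym_sym (T : X -> X) x y : asymptotic T x y -> asymptotic T y x.
Proof.
by rewrite /asymptotic; under eq_fun do rewrite metric_sym.
Qed.

Lemma dn_I (A B : set X) : open A -> dn A -> dn B -> dn (A `&` B).
Proof.
move=> oA dA dB C oC C0.
have [w [Cw Aw]] := dA C oC C0.
have [v [[Cv Av] Bv]] := dB (C `&` A) (openI oC oA) (ex_intro _ w (conj Cw Aw)).
by exists v.
Qed.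
Lemma main_aux (T : X -> X) :
  compact [set: X] ->
  (exists x y : X, x <> y) ->
  (forall x : X, ~ isolated [set: X] x) ->
  continuous T ->
  (forall y : X, exists x : X, T x = y) ->
  transitive_compact T ->
  LiYorke_chaotic T.
Proof.
move=> cX [a [b ab]] niso cT sT tc.
pose d := mdist a b / 4.
have d0 : 0 < d by rewrite /d divr_gt0 // mdist_gt0; apply/eqP.
pose P := [set S : set X | forall x y, S x -> S y -> x <> y ->
  proximal T x y /\ ~ asymptotic T x y].
have [|S [PS Smax]] := @Zorn_bigcup X P.
  move=> F FP tF x y [A FA Ax] [B FB By] xy.
  have [AB|BA] := tF A B FA FB.
  - exact: (FP B FB) (AB _ Ax) By xy.
  - exact: (FP A FA) Ax (BA _ By) xy.
exists S; split => //.
move=> /countable_injP [f finj].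
pose G (m k : nat) := [set y | forall s, S s -> f s = m ->
  (O1 T s k `&` O2 T d s k `&` ~` [set s]) y].
have GOD : forall m k, open (G m k) /\ dn (G m k).
  move=> m k; case: (pselect (exists s, S s /\ f s = m)) => [[s0 [Ss0 fs0]]|hn].
    have -> : G m k = O1 T s0 k `&` O2 T d s0 k `&` ~` [set s0].
      apply/seteqP; split => y /=.
        by move=> /(_ s0 Ss0 fs0).
      move=> hy s Ss fs.
      have es0 : s0 = s by apply: finj; rewrite ?inE // fs fs0.
      by rewrite -es0.
    have [op3 dn3] := neq_dense s0 niso.
    split; first by apply: openI; [apply: openI|]; [exact: O1_open|exact: O2_open|].
    rewrite setIC; apply: dn_I => //.
    apply: dn_I; [exact: O1_open|exact: O1_dense|exact: O2_dense].
  have -> : G m k = setT.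
    apply/seteqP; split => y //= _ s Ss fs; exfalso; apply: hn; by exists s.
  split; first exact: openT.
  by move=> B _ [w Bw]; exists w.
pose U (n : nat) := if unpickle n is Some mk then G mk.1 mk.2 else setT.
have [y hy] : exists y, forall n, U n y.
  apply: (baire_c a cX).
- move=> n; rewrite /U; case: (unpickle n) => [mk|]; first exact: (GOD _ _).1.
  exact: openT.
- move=> n; rewrite /U; case: (unpickle n) => [mk|]; first exact: (GOD _ _).2.
  by move=> B _ [w Bw]; exists w.
have hG : forall s, S s -> forall k, (O1 T s k `&` O2 T d s k `&` ~` [set s]) y.
  move=> s Ss k; have := hy (pickle (f s, k)); rewrite /U pickleK /=.
  by move=> /(_ s Ss erefl).
have yS : ~ S y by move=> Sy; have [_ /= ] := hG y Sy 0%N; apply.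
apply: (Smax (S `|` [set y])).
  split; first by move=> x Sx; left.
  by move=> /(_ y (or_intror erefl)).
have LY : forall s, S s -> proximal T s y /\ ~ asymptotic T s y.
  move=> s Ss; split.
    by apply: prox_of => k; have [[]] := hG s Ss k.
  by apply: (nasym_of d0) => k; have [[]] := hG s Ss k.
move=> x z [Sx|->] [Sz|->] xz.
- exact: PS.
- exact: LY.
- have [h1 h2] := LY z Sz; split; first exact: prox_sym.
  by move=> /asym_sym.
- by exfalso; apply: xz.
Qed.
End S.

End LYaux.

Theorem proposition6p6 (R : realType) (X : metricType R) (T : X -> X) :
  compact [set: X] ->
  (exists x y : X, x <> y) ->
  (forall x : X, ~ isolated [set: X] x) ->
  continuous T ->
  (forall y : X, exists x : X, T x = y) ->
  transitive_compact T ->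
  LiYorke_chaotic T.
Proof. exact: LYaux.main_aux. Qed.
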